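(* Let $h,n\geq2$ and let $F$ be a social preference function. Then: (i) $G(F)$ is a subgroup of $G$; (ii) $G_1(F)$ and $G_2(F)$ are subgroups of $G(F)$, with $G_1(F)\leq S_h\times\{id\}$ and $G_2(F)\leq\{id\}\times S_n$; (iii) $\langle G_1(F),G_2(F)\rangle=G_1(F)\times G_2(F)\leq G(F)$, and there exist a pair $(h,n)$ and a social preference function $F$ for which this inclusion is strict; (iv) $G(F)=G_1(F)\times G_2(F)$ if and only if $G(F)=\pi_1(G(F))\times\pi_2(G(F))$, where $\pi_1,\pi_2$ are the projections of $G$ onto $S_h$ and $S_n$; (v) if $G(F)\leq S_h\times\{id\}$ then $G(F)=G_1(F)$, and if $G(F)\leq\{id\}\times S_n$ then $G(F)=G_2(F)$.
   Context: Permutations compose as $(\sigma\tau)(x)=\sigma(\tau(x))$. Let $G=S_h\times S_n$ and $\mathcal{P}=(S_n)^h$ (preference profiles), with $G$ acting by $(p^{(\varphi,\psi)})_i=\psi\,p_{\varphi^{-1}(i)}$. A social preference function is any $F:\mathcal{P}\to S_n$. Its symmetry group is $G(F)=\{(\varphi,\psi)\in G: F(p^{(\varphi,\psi)})=\psi F(p)\ \forall p\in\mathcal{P}\}$, its anonymity group is $G_1(F)=\{(\varphi,id)\in G: F(p^{(\varphi,id)})=F(p)\ \forall p\}$ and its neutrality group is $G_2(F)=\{(id,\psi)\in G: F(p^{(id,\psi)})=\psi F(p)\ \forall p\}$. *)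

(* Defs.v *)
From mathcomp Require Import all_boot all_fingroup.
Set Implicit Arguments. Unset Strict Implicit. Unset Printing Implicit Defensive.
Import GroupScope.

(* MathComp convention: for permutations s t, (s * t) x = t (s x).
   Hence the paper's composition psi o p (i.e. (psi p)(x) = psi (p x))
   is written (p * psi)%g here. *)

Definition profile (h n : nat) := {ffun 'I_h -> 'S_n}.

Definition spf (h n : nat) := profile h n -> 'S_n.

Definition pact (h n : nat) (p : profile h n) (g : 'S_h * 'S_n) : profile h n :=
  [ffun i => p (g.1^-1 i) * g.2].

Definition symG (h n : nat) (F : spf h n) : {set 'S_h * 'S_n} :=
  [set g | [forall p : profile h n, F (pact p g) == F p * g.2]].

Definition anonG (h n : nat) (F : spf h n) : {set 'S_h * 'S_n} :=
  [set g | (g.2 == 1) && [forall p : profile h n, F (pact p g) == F p]].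

Definition neutG (h n : nat) (F : spf h n) : {set 'S_h * 'S_n} :=
  [set g | (g.1 == 1) && [forall p : profile h n, F (pact p g) == F p * g.2]].

(* Main.v *)
Require Import Defs.
From mathcomp Require Import all_boot all_fingroup.
Import GroupScope.
Set Implicit Arguments. Unset Strict Implicit.

Section General.
Variables (h n : nat) (F : spf h n).

Lemma pact1 (p : profile h n) : pact p 1 = p.
Proof. by apply/ffunP => i; rewrite ffunE /= invg1 perm1 mulg1. Qed.

Lemma pactM (p : profile h n) g k : pact (pact p g) k = pact p (g * k).
Proof.
apply/ffunP => i; rewrite !ffunE /= invMg permM mulgA //.
Qed.

Lemma symG_group : group_set (symG F).
Proof.
apply/group_setP; split.
  by rewrite inE; apply/forallP => p; rewrite pact1 mulg1.
move=> x y; rewrite !inE => /forallP Hx /forallP Hy; apply/forallP => p.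
by rewrite -pactM (eqP (Hy _)) (eqP (Hx _)) mulgA.
Qed.

Lemma anonG_group : group_set (anonG F).
Proof.
apply/group_setP; split.
  by rewrite inE eqxx /=; apply/forallP => p; rewrite pact1.
move=> x y; rewrite !inE => /andP[/eqP x2 /forallP Hx] /andP[/eqP y2 /forallP Hy].
rewrite /= x2 y2 mulg1 eqxx /=; apply/forallP => p.
by rewrite -pactM (eqP (Hy _)) (eqP (Hx _)).
Qed.

Lemma neutG_group : group_set (neutG F).
Proof.
apply/group_setP; split.
  by rewrite inE eqxx /=; apply/forallP => p; rewrite pact1 mulg1.
move=> x y; rewrite !inE => /andP[/eqP x2 /forallP Hx] /andP[/eqP y2 /forallP Hy].
rewrite /= x2 y2 mulg1 eqxx /=; apply/forallP => p.
by rewrite -pactM (eqP (Hy _)) (eqP (Hx _)) mulgA.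
Qed.

Lemma anon_sym : anonG F \subset symG F.
Proof.
apply/subsetP => x; rewrite !inE => /andP[/eqP x2 /forallP Hx].
by apply/forallP => p; rewrite x2 mulg1.
Qed.

Lemma neut_sym : neutG F \subset symG F.
Proof. by apply/subsetP => x; rewrite !inE => /andP[]. Qed.

Lemma sym_anon g : g \in symG F -> g.2 = 1 -> g \in anonG F.
Proof.
rewrite !inE => /forallP Hg g2; rewrite g2 eqxx /=; apply/forallP => p.
by rewrite (eqP (Hg p)) g2 mulg1.
Qed.

Lemma sym_neut g : g \in symG F -> g.1 = 1 -> g \in neutG F.
Proof. by rewrite !inE => Hg ->; rewrite eqxx. Qed.

Lemma anon_sub : anonG F \subset setX [set: 'S_h] [1 'S_n].
Proof.
by apply/subsetP => x; rewrite !inE => /andP[/eqP -> _]; rewrite eqxx.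
Qed.

Lemma neut_sub : neutG F \subset setX [1 'S_h] [set: 'S_n].
Proof.
by apply/subsetP => x; rewrite !inE => /andP[/eqP -> _]; rewrite eqxx.
Qed.

Let A := Group anonG_group.
Let N := Group neutG_group.
Let S := Group symG_group.

Lemma cent_AN : N \subset 'C(A).
Proof.
apply/centsP => b; rewrite !inE => /andP[/eqP b1 _] a; rewrite !inE => /andP[/eqP a2 _].
case: a b a2 b1 => [a1 a2'] [b1' b2] /= -> ->.
by rewrite /commute; congr (_, _) => /=; rewrite ?mulg1 ?mul1g.
Qed.

Lemma cap_AN : A :&: N = 1.
Proof.
apply/eqP; rewrite eqEsubset sub1G andbT; apply/subsetP => x.
rewrite !inE => /andP[/andP[/eqP x2 _] /andP[/eqP x1 _]].
by case: x x1 x2 => a b /= -> ->.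
Qed.

Lemma pmulE (x y : 'S_h * 'S_n) : x * y = (x.1 * y.1, x.2 * y.2).
Proof. by []. Qed.

Lemma memAN x : (x \in anonG F * neutG F) = ((x.1, 1) \in anonG F) && ((1, x.2) \in neutG F).
Proof.
apply/idP/idP.
  case/mulsgP => [[a1 a2] [b1 b2] Ha Hb ->].
  have Ha' := Ha; have Hb' := Hb.
  rewrite !inE /= in Ha' Hb'; case/andP: Ha' => /eqP a2e _; case/andP: Hb' => /eqP b1e _.
  rewrite pmulE /=; move: Ha Hb; rewrite a2e b1e mulg1 mul1g => -> -> //.
case/andP => Ha Hb.
have -> : x = (x.1, 1) * (1, x.2) by case: x {Ha Hb} => a b; rewrite pmulE /=; congr (_, _); rewrite ?mulg1 ?mul1g.
exact: mem_mulg.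
Qed.

Lemma dpE : anonG F \x neutG F = anonG F * neutG F.
Proof. exact: (dprodE cent_AN cap_AN). Qed.

Lemma dpEY : anonG F \x neutG F = <<anonG F :|: neutG F>>.
Proof. exact: (dprodEY cent_AN cap_AN). Qed.

Lemma dp_sub : anonG F \x neutG F \subset symG F.
Proof.
rewrite dpEY; change (<<anonG F :|: neutG F>> \subset S); rewrite gen_subG; apply/subsetP => x; rewrite inE => /orP[].
  by apply/subsetP/anon_sym.
by apply/subsetP/neut_sym.
Qed.

Lemma partiv : symG F = anonG F \x neutG F <->
      symG F = setX (fst @: symG F) (snd @: symG F).
Proof.
rewrite dpE; split => E.
  rewrite E; apply/setP => x; apply/idP/idP.
    by move=> Hx; rewrite inE !imset_f.
  rewrite inE => /andP[/imsetP[y Hy e1] /imsetP[z Hz e2]].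
  rewrite memAN e1 e2; move: Hy Hz; rewrite !memAN => /andP[-> _] /andP[_ ->] //.
apply/eqP; rewrite eqEsubset -dpE dp_sub andbT dpE; apply/subsetP => x Hx.
have H1 : (1 : 'S_h * 'S_n) \in symG F by exact: (group1 S).
rewrite memAN; apply/andP; split.
  apply: sym_anon => //; rewrite E inE /= imset_f //.
  by apply/imsetP; exists 1.
apply: sym_neut => //; rewrite E inE /= imset_f ?andbT //.
by apply/imsetP; exists 1.
Qed.

Lemma partv1 : symG F \subset setX [set: 'S_h] [1 'S_n] -> symG F = anonG F.
Proof.
move=> H; apply/eqP; rewrite eqEsubset anon_sym andbT; apply/subsetP => x Hx.
apply: sym_anon => //; move/subsetP: H => /(_ x Hx); rewrite !inE => /andP[_ /eqP] //.
Qed.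

Lemma partv2 : symG F \subset setX [1 'S_h] [set: 'S_n] -> symG F = neutG F.
Proof.
move=> H; apply/eqP; rewrite eqEsubset neut_sym andbT; apply/subsetP => x Hx.
apply: sym_neut => //; move/subsetP: H => /(_ x Hx); rewrite !inE => /andP[/eqP ? _] //.
Qed.

End General.

Definition j0 : 'I_3 := @Ordinal 3 0 isT.
Definition j1 : 'I_3 := @Ordinal 3 1 isT.
Definition j2 : 'I_3 := @Ordinal 3 2 isT.
Definition k0 : 'I_2 := @Ordinal 2 0 isT.
Definition k1 : 'I_2 := @Ordinal 2 1 isT.
Definition tt2 : 'S_2 := tperm k0 k1.
Definition phi3 : 'S_3 := tperm j0 j1.

Definition Fex : spf 3 2 := fun p =>
  if (p j0 != 1) && (p j1 == 1) then p j2 * p j0 else p j2.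

Lemma I2 (i : 'I_2) : i = k0 \/ i = k1.
Proof. by case: i => [[|[|]]] //= H; [left|right]; apply/val_inj. Qed.

Lemma S2 (s : 'S_2) : s = 1 \/ s = tt2.
Proof.
case: (I2 (s k0)) => H0.
  left; apply/permP => i; rewrite perm1; case: (I2 i) => -> //.
  case: (I2 (s k1)) => // H1; exfalso.
  by have /perm_inj := etrans H1 (esym H0).
right; apply/permP => i; case: (I2 i) => ->; rewrite ?tpermL ?tpermR //.
case: (I2 (s k1)) => // H1; exfalso.
by have /perm_inj := etrans H1 (esym H0).
Qed.

Lemma tt2_neq1 : tt2 != 1.
Proof. by apply/eqP => /permP /(_ k0); rewrite perm1 /tt2 tpermL. Qed.

Lemma g_sym : (phi3, tt2) \in symG Fex.
Proof.
rewrite inE; apply/forallP => p; apply/eqP.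
rewrite /Fex /pact !ffunE /= /phi3 tpermV tpermL tpermR tpermD //.
have t2 : tt2 * tt2 = 1 by apply: tperm2.
have tn := tt2_neq1.
case: (S2 (p j0)) => ->; case: (S2 (p j1)) => ->;
  rewrite ?mul1g ?t2 ?eqxx ?(negbTE tn) /= ?mulg1 -?mulgA ?t2 ?mulg1 //.
Qed.

Lemma g1_nsym : (phi3, 1) \notin symG Fex.
Proof.
rewrite inE; apply/negP => /forallP /(_ [ffun i => if i == j0 then tt2 else 1]) /eqP.
rewrite /Fex /pact !ffunE /= /phi3 tpermV tpermL tpermR tpermD //.
have e10 : (j1 == j0) = false by [].
have e20 : (j2 == j0) = false by [].
rewrite e10 e20 !eqxx !mulg1 tt2_neq1 eqxx /= mul1g => /eqP.
by rewrite eq_sym (negbTE tt2_neq1).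
Qed.
Theorem mainTheorem13 :
  (forall (h n : nat) (F : spf h n), 2 <= h -> 2 <= n ->
     (* (i) *)
     group_set (symG F)
     (* (ii) *)
  /\ (group_set (anonG F) /\ anonG F \subset symG F
      /\ group_set (neutG F) /\ neutG F \subset symG F
      /\ anonG F \subset setX [set: 'S_h] [1 'S_n]
      /\ neutG F \subset setX [1 'S_h] [set: 'S_n])
     (* (iii) first part *)
  /\ (<<anonG F :|: neutG F>> = anonG F \x neutG F
      /\ anonG F \x neutG F \subset symG F)
     (* (iv) *)
  /\ (symG F = anonG F \x neutG F <->
      symG F = setX (fst @: symG F) (snd @: symG F))
     (* (v) *)
  /\ (symG F \subset setX [set: 'S_h] [1 'S_n] -> symG F = anonG F)
  /\ (symG F \subset setX [1 'S_h] [set: 'S_n] -> symG F = neutG F))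
  /\
  (* (iii) second part: the inclusion can be strict *)
  (exists (h n : nat) (F : spf h n), [/\ 2 <= h, 2 <= n &
     anonG F \x neutG F \proper symG F]).
Proof.
split.
  move=> h n F _ _.
  split; first exact: symG_group.
  split; first by split; [exact: anonG_group | split; [exact: anon_sym | split; [exact: neutG_group | split; [exact: neut_sym | split; [exact: anon_sub | exact: neut_sub]]]]].
  split; first by split; [rewrite dpEY | exact: dp_sub].
  split; first exact: partiv.
  by split; [exact: partv1 | exact: partv2].
exists 3, 2, Fex; split => //.
rewrite properE dp_sub /=; apply/negP => /subsetP /(_ _ g_sym).
rewrite dpE memAN /= => /andP[Ha _].
by move: g1_nsym; rewrite (subsetP (anon_sym Fex) _ Ha).
Qed.
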